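(* For spans $A\leftarrow M\to B$ and $B\leftarrow N\to C$, regarded as linear bicomodules $M\mathcal y\colon A\mathcal y\Leftarrow B\mathcal y$ and $N\mathcal y\colon B\mathcal y\Leftarrow C\mathcal y$, there is an isomorphism of $(A\mathcal y,C\mathcal y)$-bicomodules $$(M\mathcal y)^\vee\triangleleft_{B\mathcal y}(N\mathcal y)^\vee\;\cong\;\big(M\mathcal y\triangleleft_{B\mathcal y}N\mathcal y\big)^\vee.$$
   Context: $C\mathcal y$ is the discrete category (comonoid in $(\mathbf{Poly},\mathcal y,\triangleleft)$) on a set $C$; bicomodules between discrete categories with linear carrier are spans, and $\triangleleft_{B\mathcal y}$ (bicomodule composition, an equalizer in $\mathbf{Poly}$) corresponds on spans to composition by pullback. For a span $C\xleftarrow{f}M\xrightarrow{g}D$ with fibers $M_a$ over $a\in C$, the dual is the conjunctive bicomodule $(M\mathcal y)^\vee\cong\sum_{a\in C}\mathcal y^{M_a}$ (defined as $[M\mathcal y,\bot]$ for the local internal hom and the terminal span $\bot$), whose prafunctor $D\text{-}\mathbf{Set}\to C\text{-}\mathbf{Set}$ is $\Pi_f\Delta_g$. *)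

(* Defs.v *)
(* A bicomodule  A y <= C y  between discrete categories: a polynomial
   sum_{i : pos} y^{dir i} together with a map of positions to A
   (left coaction) and, for each position, a map of directions to C
   (right coaction).  Its prafunctor C-Set -> A-Set is
   X |-> (a |-> sum_{i, base i = a} prod_{d : dir i} X_{fib i d}). *)
Record Bicomod (A C : Type) := {
  pos  : Type;
  base : pos -> A;
  dir  : pos -> Type;
  fib  : forall i : pos, dir i -> C
}.
Arguments pos {A C} _.
Arguments base {A C} _ _.
Arguments dir {A C} _ _.
Arguments fib {A C} _ _ _.

(* Bicomodule composition  p <|_{B y} q  (the equalizer in Poly):
   a position is a position i of p together with, for every direction d
   of p at i, a position of q lying over fib p i d; directions are
   dependent pairs of directions. *)
Definition bicomod_comp {A B C : Type} (p : Bicomod A B) (q : Bicomod B C)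
  : Bicomod A C :=
  {| pos  := { i : pos p & forall d : dir p i, { j : pos q | base q j = fib p i d } };
     base := fun x => base p (projT1 x);
     dir  := fun x => { d : dir p (projT1 x) & dir q (proj1_sig (projT2 x d)) };
     fib  := fun x y => fib q (proj1_sig (projT2 x (projT1 y))) (projT2 y) |}.

(* Isomorphism of (A y, C y)-bicomodules: an isomorphism in Poly
   (bijection on positions, bijections on directions going backwards)
   compatible with both coactions. *)
Definition bicomod_iso {A C : Type} (p q : Bicomod A C) : Prop :=
  exists (phi : pos p -> pos q) (phi' : pos q -> pos p)
         (psi : forall i : pos p, dir q (phi i) -> dir p i)
         (psi' : forall i : pos p, dir p i -> dir q (phi i)),
    (forall i, phi' (phi i) = i) /\ (forall j, phi (phi' j) = j) /\
    (forall i e, psi' i (psi i e) = e) /\ (forall i d, psi i (psi' i d) = d) /\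
    (forall i, base q (phi i) = base p i) /\
    (forall i e, fib p i (psi i e) = fib q (phi i) e).

Record Span (A B : Type) := {
  apex : Type;
  sleft : apex -> A;
  sright : apex -> B
}.
Arguments apex {A B} _.
Arguments sleft {A B} _ _.
Arguments sright {A B} _ _.

Definition linear {A B : Type} (M : Span A B) : Bicomod A B :=
  {| pos := apex M; base := sleft M; dir := fun _ => unit;
     fib := fun m _ => sright M m |}.

(* Composition of spans by pullback; this is what  M y <|_{B y} N y
   corresponds to on linear bicomodules (see context). *)
Definition span_comp {A B C : Type} (M : Span A B) (N : Span B C) : Span A C :=
  {| apex := { mn : apex M * apex N | sright M (fst mn) = sleft N (snd mn) };
     sleft := fun x => sleft M (fst (proj1_sig x));
     sright := fun x => sright N (snd (proj1_sig x)) |}.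

(* The dual (conjunctive) bicomodule (M y)^vee = sum_{a : A} y^{M_a},
   with M_a the fiber of the left leg over a, directions mapped to B by
   the right leg. *)
Definition span_dual {A B : Type} (M : Span A B) : Bicomod A B :=
  {| pos := A; base := fun a => a;
     dir := fun a => { m : apex M | sleft M m = a };
     fib := fun a m => sright M (proj1_sig m) |}.

(* Main.v *)
Require Import Defs.
From Stdlib Require Import FunctionalExtensionality ProofIrrelevance.

Theorem proposition2p55 (A B C : Type) (M : Span A B) (N : Span B C) :
  bicomod_iso (bicomod_comp (span_dual M) (span_dual N))
              (span_dual (span_comp M N)).
Proof.
  unshelve eexists (fun x => projT1 x).
  unshelve eexists (fun a => existT _ a (fun d => exist _ (sright M (proj1_sig d)) eq_refl)).
  unshelve eexists.
  { intros [a f] [[[m n] e1] e2]; simpl in *.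
    exists (exist _ m e2). simpl. exists n.
    destruct (f (exist _ m e2)) as [j ej]; simpl. rewrite ej; symmetry; exact e1. }
  unshelve eexists.
  { intros [a f] [[m e2] [n e3]]; simpl in *.
    exists (exist _ (m, n) (eq_trans (eq_sym (proj2_sig (f (exist _ m e2)))) (eq_sym e3))).
    exact e2. }
  split; [|split; [|split; [|split; [|split]]]].
  - intros [a f]; simpl. f_equal. apply functional_extensionality_dep. intros d.
    destruct (f d) as [j ej]; simpl. apply eq_sig_hprop; [intros; apply proof_irrelevance|]. symmetry; exact ej.
  - intros a; reflexivity.
  - intros [a f] [[[m n] e1] e2]; simpl.
    apply eq_sig_hprop; [intros; apply proof_irrelevance|]. simpl.
    apply eq_sig_hprop; [intros; apply proof_irrelevance|]. reflexivity.
  - intros [a f] [[m e2] [n e3]]; simpl.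
    f_equal. apply eq_sig_hprop; [intros; apply proof_irrelevance|]. reflexivity.
  - intros; reflexivity.
  - intros [a f] [[[m n] e1] e2]; simpl.
    destruct (f (exist _ m e2)) as [j ej]; reflexivity.
Qed.
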